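(* Let $k$ be an algebraically closed field of characteristic zero, $n\ge2$, $q\in k$ a primitive $2n$-th root of unity. Let $\mathfrak wH_{4n}^*$ be the algebra generated by $G,X$ with relations $G^{2n+1}=G$, $GX=-XG$, $X^2=1-G^2$, with comultiplication $\Delta(G)=G\otimes G$, $\Delta(X)=X\otimes1+G\otimes X$ (tensor products of modules are formed via $\Delta$). Define the following modules: for $s\in\{0,n\}$, $M[1,s]$ is $1$-dimensional with basis $v_s$, $Xv_s=0$, $Gv_s=(-1)^{s/n}v_s$; $M[2,s]$ is $2$-dimensional with basis $v_1^s,v_2^s$, $Xv_1^s=v_2^s$, $Xv_2^s=0$, $Gv_1^s=(-1)^{s/n}v_1^s$, $Gv_2^s=(-1)^{s/n+1}v_2^s$; for an integer $j$ with $n\nmid j$, $P_j$ is $2$-dimensional with basis $p_1^j,p_2^j$, $Xp_1^j=p_2^j$, $Xp_2^j=(1-q^{2j})p_1^j$, $Gp_1^j=q^jp_1^j$, $Gp_2^j=-q^jp_2^j$; for $i\in\{0,1\}$, $N_i$ is $1$-dimensional with basis $w_i$, $Gw_i=0$, $Xw_i=(-1)^iw_i$; $M_0$ is $2$-dimensional with basis $m_0,m_1$, $Xm_0=m_1$, $Xm_1=m_0$, $G$ acting by $0$. Then the following isomorphisms of $\mathfrak wH_{4n}^*$-modules hold: (1) for $1\le i,j\le n-1$: $P_i\otimes P_j\cong M[2,0]\oplus M[2,n]$ if $n\mid i+j$, and $P_i\otimes P_j\cong P_{i+j}\oplus P_{i+j}$ if $n\nmid i+j$; (2) for $k\in\{1,2\}$,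 $s\in\{0,n\}$, $1\le j\le n-1$: $M[k,s]\otimes P_j\cong P_j^{\oplus k}\cong P_j\otimes M[k,s]$; (3) for $k,l\in\{1,2\}$, $s,j\in\{0,n\}$: $M[k,s]\otimes M[l,j]\cong M[2,0]\oplus M[2,n]$ if $k+l=4$, and $M[k,s]\otimes M[l,j]\cong M[k+l-1,\,s+j \bmod 2n]$ if $k+l<4$; (4) for $i,j\in\{0,1\}$: $N_i\otimes N_j\cong N_i$; (5) for $k\in\{1,2\}$, $s\in\{0,n\}$, $j\in\{0,1\}$: $M[1,s]\otimes N_j\cong N_{j+s/n \bmod 2}$ and $M[2,s]\otimes N_j\cong M_0$; (6) for $k\in\{1,2\}$, $s\in\{0,n\}$, $j\in\{0,1\}$: $N_j\otimes M[k,s]\cong N_j^{\oplus k}$; (7) for $i\in\{0,1\}$, $1\le j\le n-1$: $N_i\otimes P_j\cong N_i\oplus N_i$ and $P_j\otimes N_i\cong M_0$; (8) for $i\in\{0,1\}$: $N_i\otimes M_0\cong N_i\oplus N_i$ and $M_0\otimes N_i\cong M_0$; (9) $M_0\otimes M_0\cong M_0\oplus M_0$; (10) for $k\in\{1,2\}$, $s\in\{0,n\}$: $M_0\otimes M[k,s]\cong M_0^{\oplus k}\cong M[k,s]\otimes M_0$; (11) for $1\le j\le n-1$: $M_0\otimes P_j\cong M_0\oplus M_0\cong P_j\otimes M_0$.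
   Context: The paper lists the indecomposable modules $P_j$ only for $1\le j\le n-1$; in item (1), $P_{i+j}$ with $n<i+j$ is the module defined by the same formula (equivalently, isomorphic to $P_{i+j-n}$). *)

(* Defs.v *)
From HB Require Import structures.
From mathcomp Require Import all_boot all_order all_algebra.
From mathcomp Require Import mxtens.
Set Implicit Arguments. Unset Strict Implicit. Unset Printing Implicit Defensive.
Import Order.TTheory GRing.Theory.
Local Open Scope ring_scope.

(* A finite-dimensional module over wH_{4n}^*, given by the matrices of the
   generators G and X acting on column vectors of F^wdim (column j of a
   matrix is the image of the j-th basis vector). *)
Record wHmod (F : fieldType) := WHMod {
  wdim : nat;
  wG : 'M[F]_wdim;
  wX : 'M[F]_wdim }.

(* Tensor product via Delta(G) = G (x) G, Delta(X) = X (x) 1 + G (x) X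
   (Kronecker products). *)
Definition wtens (F : fieldType) (M N : wHmod F) : wHmod F :=
  @WHMod F (wdim M * wdim N)
    (tensmx (wG M) (wG N))
    (tensmx (wX M) (1%:M : 'M[F]_(wdim N)) + tensmx (wG M) (wX N)).

Definition wsum (F : fieldType) (M N : wHmod F) : wHmod F :=
  @WHMod F (wdim M + wdim N)
    (block_mx (wG M) 0 0 (wG N))
    (block_mx (wX M) 0 0 (wX N)).

Definition wzero (F : fieldType) : wHmod F := @WHMod F 0 0 0.

Definition wpow (F : fieldType) (M : wHmod F) (k : nat) : wHmod F :=
  iter k (wsum M) (wzero F).

Definition wiso (F : fieldType) (M N : wHmod F) : Prop :=
  exists P : 'M[F]_(wdim N, wdim M),
    [/\ row_free P && row_full P,
        P *m wG M = wG N *m P &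
        P *m wX M = wX N *m P].

Definition mx2 (F : fieldType) (a b c d : F) : 'M[F]_2 :=
  \matrix_(i < 2, j < 2)
    if i == 0 :> nat then (if j == 0 :> nat then a else b)
    else (if j == 0 :> nat then c else d).

Definition mod1 (F : fieldType) (g x : F) : wHmod F :=
  @WHMod F 1 (g%:M) (x%:M).
Definition mod2 (F : fieldType) (G X : 'M[F]_2) : wHmod F := @WHMod F 2 G X.

Section Modules.
Variables (F : fieldType) (n : nat) (q : F).

Definition sgn (s : nat) : F := (-1) ^+ (s %/ n).

Definition M1 (s : nat) : wHmod F := mod1 (sgn s) 0.
Definition M2 (s : nat) : wHmod F :=
  mod2 (mx2 (sgn s) 0 0 (- sgn s)) (mx2 0 0 1 0).
Definition Mks (k s : nat) : wHmod F := if k == 1%N then M1 s else M2 s.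
Definition Pj (j : nat) : wHmod F :=
  mod2 (mx2 (q ^+ j) 0 0 (- q ^+ j)) (mx2 0 (1 - q ^+ (2 * j)) 1 0).
Definition Ni (i : nat) : wHmod F := mod1 0 ((-1) ^+ i).
Definition M0 : wHmod F := mod2 0 (mx2 0 1 1 0).
End Modules.

(* Main.v *)
Require Import Defs.
From HB Require Import structures.
From mathcomp Require Import all_boot all_order all_algebra.
From mathcomp Require Import mxtens.
From mathcomp Require Import ring zify.
Import GRing.Theory.
Local Open Scope ring_scope.

Section FW.
Variable F : fieldType.

Definition fm (m n : nat) (f : nat -> nat -> F) : 'M[F]_(m,n) := \matrix_(i<m, j<n) f i j.
Definition lm (l : seq (seq F)) : nat -> nat -> F := fun i j => nth 0 (nth [::] l i) j.
Definition sumf (n : nat) (h : nat -> F) : F := foldr (fun k acc => h k + acc) 0 (iota 0 n).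

Lemma fm_eq m n f g : (forall i, (i < m)%N -> forall j, (j < n)%N -> f i j = g i j) ->
  fm m n f = fm m n g.
Proof. by move=> H; apply/matrixP => i j; rewrite !mxE H. Qed.

Lemma mx2E (a b c d : F) : mx2 a b c d =
  fm 2 2 (fun i j => if i == 0%N then (if j == 0%N then a else b) else (if j == 0%N then c else d)).
Proof. by []. Qed.

Lemma scalE m (g : F) : (g%:M : 'M_m) = fm m m (fun i j => if i == j then g else 0).
Proof. apply/matrixP => i j; rewrite !mxE /=; have -> : (nat_of_ord i == nat_of_ord j) = (i == j) by []. by case: (i == j). Qed.

Lemma zeroE m n : (0 : 'M[F]_(m,n)) = fm m n (fun _ _ => 0).
Proof. by apply/matrixP => i j; rewrite !mxE. Qed.

Lemma tensE m n p r f g : tensmx (fm m n f) (fm p r g) =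
  fm (m * p) (n * r) (fun i j => f (i %/ p)%N (j %/ r)%N * g (i %% p)%N (j %% r)%N).
Proof. by apply/matrixP => i j; rewrite !mxE. Qed.

Lemma addE m n f g : fm m n f + fm m n g = fm m n (fun i j => f i j + g i j).
Proof. by apply/matrixP => i j; rewrite !mxE. Qed.

Lemma sumfE n (h : nat -> F) : \sum_(k < n) h k = sumf n h.
Proof.
rewrite /sumf -(big_mkord xpredT h) /index_iota subn0.
by elim: (iota 0 n) => [|x s IH]; rewrite ?big_nil ?big_cons ?IH.
Qed.

Lemma mulE m n p f g : fm m n f *m fm n p g = fm m p (fun i j => sumf n (fun k => f i k * g k j)).
Proof. apply/matrixP => i j; rewrite !mxE -sumfE; apply: eq_bigr => k _; by rewrite !mxE. Qed.

Lemma blockE m1 m2 n1 n2 a b c d : block_mx (fm m1 n1 a) (fm m1 n2 b) (fm m2 n1 c) (fm m2 n2 d) =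
  fm (m1 + m2) (n1 + n2) (fun i j => if (i < m1)%N then (if (j < n1)%N then a i j else b i (j - n1)%N)
     else (if (j < n1)%N then c (i - m1)%N j else d (i - m1)%N (j - n1)%N)).
Proof.
apply/matrixP => i j.
rewrite -(splitK i) -(splitK j); case: (split i) => i'; case: (split j) => j' /=;
rewrite ?block_mxEul ?block_mxEur ?block_mxEdl ?block_mxEdr !mxE /= ?ltn_ord;
rewrite ?(ltnNge (m1 + _)%N) ?(ltnNge (n1 + _)%N) ?leq_addr //= ?addKn //.
Qed.

Lemma wisoR (M N : wHmod F) (P : 'M[F]_(wdim N, wdim M)) (Q : 'M[F]_(wdim M, wdim N)) :
  P *m Q = 1%:M -> Q *m P = 1%:M -> P *m wG M = wG N *m P -> P *m wX M = wX N *m P -> wiso M N.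
Proof.
move=> PQ QP HG HX; exists P; split => //.
by apply/andP; split; [apply/row_freeP; exists Q|apply/row_fullP; exists Q].
Qed.

Lemma wisoL (M N : wHmod F) (P : 'M[F]_(wdim N, wdim M)) (Q : 'M[F]_(wdim M, wdim N)) :
  P *m Q = 1%:M -> Q *m P = 1%:M -> Q *m wG N = wG M *m Q -> Q *m wX N = wX M *m Q -> wiso M N.
Proof.
move=> PQ QP HG HX; apply: (@wisoR M N P Q PQ QP).
  by rewrite -[LHS]mulmx1 -QP !mulmxA -(mulmxA P) -HG mulmxA PQ mul1mx.
by rewrite -[LHS]mulmx1 -QP !mulmxA -(mulmxA P) -HX mulmxA PQ mul1mx.
Qed.

End FW.
Arguments fm {F} m n f.
Arguments lm {F} l i j.
Arguments sumf {F} n h.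

Ltac natc := repeat match goal with
  | |- context [(?x %/ ?y)%N] => let v := eval vm_compute in (x %/ y)%N in change (x %/ y)%N with v
  | |- context [(?x %% ?y)%N] => let v := eval vm_compute in (x %% y)%N in change (x %% y)%N with v
  | |- context [(?x - ?y)%N] => let v := eval vm_compute in (x - y)%N in change (x - y)%N with v
  | |- context [(?x <= ?y)%N] => let v := eval vm_compute in (x <= y)%N in change (x <= y)%N with v
  end.

Ltac isnum v := lazymatch v with O => idtac | S _ => idtac end.
Ltac natd := repeat match goal with
  | |- context [(?x * ?y)%N] => let v := eval vm_compute in (x * y)%N in isnum v; change (x * y)%N with v
  | |- context [(?x + ?y)%N] => let v := eval vm_compute in (x + y)%N in isnum v; change (x + y)%N with v
  end.

Ltac enum4 := let i := fresh "i" in let Hi := fresh "Hi" in move=> i; case: i => [|[|[|[|i]]]] Hi; try (exfalso; lia).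

Ltac mxsolve := simpl wdim; simpl wG; simpl wX; natd; rewrite ?mx2E ?scalE ?zeroE ?tensE ?addE ?mulE ?blockE; natd; rewrite ?tensE ?addE ?mulE ?blockE; natd; rewrite ?tensE ?addE ?mulE ?blockE; natd; apply: fm_eq; enum4; enum4; rewrite /sumf /lm /=; natc; simpl.

Lemma wisoLf (F : fieldType) (M N : wHmod F) (f g : nat -> nat -> F) :
  let P := fm (wdim N) (wdim M) f in let Q := fm (wdim M) (wdim N) g in
  P *m Q = 1%:M -> Q *m P = 1%:M -> Q *m wG N = wG M *m Q -> Q *m wX N = wX M *m Q -> wiso M N.
Proof. exact: wisoL. Qed.
Lemma wisoRf (F : fieldType) (M N : wHmod F) (f g : nat -> nat -> F) :
  let P := fm (wdim N) (wdim M) f in let Q := fm (wdim M) (wdim N) g in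
  P *m Q = 1%:M -> Q *m P = 1%:M -> P *m wG M = wG N *m P -> P *m wX M = wX N *m P -> wiso M N.
Proof. exact: wisoR. Qed.

Section Cases.
Variable F : fieldType.
Definition PP (a : F) := mod2 (mx2 a 0 0 (-a)) (mx2 0 (1 - a^+2) 1 0).
Definition MM2 (s : F) := mod2 (mx2 s 0 0 (-s)) (mx2 0 0 1 0).
Definition MM1 (s : F) := mod1 s 0.
Definition NN (e : F) := mod1 0 e.
Definition MM0 : wHmod F := mod2 0 (mx2 0 1 1 0).
Definition pm (s : F) := s = 1 \/ s = -1.
Definition idl : nat -> nat -> F := fun i j => if i == j then 1 else 0.

Ltac fin := rewrite /idl /=; first [ring | (field; done) | done].
Ltac go := rewrite /PP /MM2 /MM1 /NN /MM0; mxsolve; fin.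

Lemma c1a a b (ha : a != 0) (hab : a * b = -1) :
  wiso (wtens (PP a) (PP b)) (wsum (MM2 1) (MM2 (-1))).
Proof.
have -> : b = - a^-1 by rewrite -[b]mul1r -(mulVf ha) -mulrA hab mulrN1.
apply: (@wisoLf _ _ _ (lm [:: [:: 0;1;-a;0]; [:: 0;0;0;1]; [:: 1;0;0;-a*(1-(-a^-1)^+2)]; [:: 0;0;1;0]])
  (lm [:: [:: 0; a*(1-(-a^-1)^+2); 1; 0]; [:: 1;0;0;a]; [:: 0;0;0;1]; [:: 0;1;0;0]])); go.
Qed.

Lemma c1b a b (h : 1 - (a*b)^+2 != 0) :
  wiso (wtens (PP a) (PP b)) (wsum (PP (a*b)) (PP (a*b))).
Proof.
pose D := 1 - (a*b)^+2.
apply: (@wisoLf _ _ _ (lm [:: [:: 1;0;0;0]; [:: 0; a*(1-b^+2)/D; (1-a^+2)/D; 0]; [::0;0;0;1]; [:: 0; 1/D; -a/D; 0]])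
   (lm [:: [:: 1;0;0;0]; [:: 0; a; 0; 1-a^+2]; [::0;1;0;-a*(1-b^+2)]; [:: 0;0;1;0]])); rewrite /D; go.
Qed.

Lemma c2a1 s a (hs : pm s) (h : 1 - a^+2 != 0) :
  wiso (wtens (MM1 s) (PP a)) (wsum (PP a) (wzero F)).
Proof.
case: hs => ->.
  by apply: (@wisoLf _ _ _ idl idl); go.
pose D := 1 - a^+2.
apply: (@wisoLf _ _ _ (lm [:: [:: 0;1]; [:: -1/D; 0]]) (lm [:: [:: 0; -D]; [:: 1; 0]])); rewrite /D; go.
Qed.

Lemma c2b1 s a (hs : pm s) (h : 1 - a^+2 != 0) :
  wiso (wsum (PP a) (wzero F)) (wtens (PP a) (MM1 s)).
Proof.
case: hs => ->.
  by apply: (@wisoRf _ _ _ idl idl); go.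
pose D := 1 - a^+2.
apply: (@wisoRf _ _ _ (lm [:: [:: 0; D]; [:: 1; 0]]) (lm [:: [:: 0;1]; [:: 1/D; 0]])); rewrite /D; go.
Qed.

Lemma c2a2 s a (hs : pm s) (h : 1 - a^+2 != 0) :
  wiso (wtens (MM2 s) (PP a)) (wsum (PP a) (wsum (PP a) (wzero F))).
Proof.
pose D := 1 - a^+2.
case: hs => ->.
  apply: (@wisoLf _ _ _ (lm [:: [:: 1;0;0;0]; [:: 0;1;0;0]; [:: 0;0;0;1]; [:: 0;1/D;-1/D;0]])
    (lm [:: [:: 1;0;0;0]; [:: 0;1;0;0]; [:: 0;1;0;-D]; [:: 0;0;1;0]])); rewrite /D; go.
apply: (@wisoLf _ _ _ (lm [:: [:: 0;1;0;0]; [:: -1/D;0;0;0]; [:: 0;0;1;0]; [:: 1/D;0;0;1]])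
    (lm [:: [:: 0;-D;0;0]; [:: 1;0;0;0]; [:: 0;0;1;0]; [:: 0;1;0;1]])); rewrite /D; go.
Qed.

Lemma c2b2 s a (hs : pm s) (h : 1 - a^+2 != 0) :
  wiso (wsum (PP a) (wsum (PP a) (wzero F))) (wtens (PP a) (MM2 s)).
Proof.
pose D := 1 - a^+2.
case: hs => ->.
  apply: (@wisoRf _ _ _ (lm [:: [:: 1;0;0;0]; [:: 0;a;0;D]; [:: 0;1;0;0]; [:: 0;0;1;0]])
    (lm [:: [:: 1;0;0;0]; [:: 0;0;1;0]; [:: 0;0;0;1]; [:: 0;1/D;-a/D;0]])); rewrite /D; go.
apply: (@wisoRf _ _ _ (lm [:: [:: 0;0;0;D]; [:: 1;0;0;0]; [:: 0;0;1;0]; [:: 0;1;0;-a]])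
    (lm [:: [:: 0;1;0;0]; [:: a/D;0;0;1]; [:: 0;0;1;0]; [:: 1/D;0;0;0]])); rewrite /D; go.
Qed.

Lemma c3a s t (hs : pm s) (ht : pm t) :
  wiso (wtens (MM2 s) (MM2 t)) (wsum (MM2 1) (MM2 (-1))).
Proof.
have A (r : F) : pm r -> wiso (wtens (MM2 r) (MM2 r)) (wsum (MM2 1) (MM2 (-1))).
  move=> hr; apply: (@wisoLf _ _ _ (lm [:: [:: 1;0;0;0]; [:: 0;0;1;0]; [:: 0;1;-r;0]; [:: 0;0;0;1]])
     (lm [:: [:: 1;0;0;0]; [:: 0;r;1;0]; [:: 0;1;0;0]; [:: 0;0;0;1]])); case: hr => ->; go.
have B (r : F) : pm r -> wiso (wtens (MM2 r) (MM2 (-r))) (wsum (MM2 1) (MM2 (-1))).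
  move=> hr; apply: (@wisoLf _ _ _ (lm [:: [:: 0;1;-r;0]; [:: 0;0;0;1]; [:: 1;0;0;0]; [:: 0;0;1;0]])
     (lm [:: [:: 0;0;1;0]; [:: 1;0;0;r]; [:: 0;0;0;1]; [:: 0;1;0;0]])); case: hr => ->; go.
case: hs => ->; case: ht => ->.
- exact: A (or_introl erefl).
- exact: B (or_introl erefl).
- by rewrite -{2}(opprK 1); apply: B; right.
- exact: A (or_intror erefl).
Qed.

Lemma c3_11 s t : wiso (wtens (MM1 s) (MM1 t)) (MM1 (s * t)).
Proof. by apply: (@wisoRf _ _ _ idl idl); go. Qed.

Lemma c3_12 s t (hs : pm s) : wiso (wtens (MM1 s) (MM2 t)) (MM2 (s * t)).
Proof.
by apply: (@wisoRf _ _ _ (lm [:: [:: 1;0]; [:: 0;s]]) (lm [:: [:: 1;0]; [:: 0;s]])); case: hs => ->; go.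
Qed.

Lemma c3_21 s t : wiso (wtens (MM2 s) (MM1 t)) (MM2 (s * t)).
Proof. by apply: (@wisoRf _ _ _ idl idl); go. Qed.

Lemma c4 e d : wiso (wtens (NN e) (NN d)) (NN e).
Proof. by apply: (@wisoRf _ _ _ idl idl); go. Qed.

Lemma c5a s e : wiso (wtens (MM1 s) (NN e)) (NN (e*s)).
Proof. by apply: (@wisoRf _ _ _ idl idl); go. Qed.

Lemma c5b s e (hs : pm s) (he : pm e) : wiso (wtens (MM2 s) (NN e)) MM0.
Proof.
by apply: (@wisoLf _ _ _ (lm [:: [:: 1;-(s*e)]; [:: 0;1]]) (lm [:: [:: 1;s*e]; [:: 0;1]]));
  case: hs => ->; case: he => ->; go.
Qed.

Lemma c6_1 e s : wiso (wtens (NN e) (MM1 s)) (wsum (NN e) (wzero F)).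
Proof. by apply: (@wisoRf _ _ _ idl idl); go. Qed.

Lemma c6_2 e s : wiso (wtens (NN e) (MM2 s)) (wsum (NN e) (wsum (NN e) (wzero F))).
Proof. by apply: (@wisoRf _ _ _ idl idl); go. Qed.

Lemma c7a e a : wiso (wtens (NN e) (PP a)) (wsum (NN e) (NN e)).
Proof. by apply: (@wisoRf _ _ _ idl idl); go. Qed.

Lemma c7b e a (he : pm e) : wiso (wtens (PP a) (NN e)) MM0.
Proof.
by apply: (@wisoLf _ _ _ (lm [:: [:: 1;-(e*a)]; [:: 0;1]]) (lm [:: [:: 1;e*a]; [:: 0;1]]));
  case: he => ->; go.
Qed.

Lemma c8a e : wiso (wtens (NN e) MM0) (wsum (NN e) (NN e)).
Proof. by apply: (@wisoRf _ _ _ idl idl); go. Qed.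

Lemma c8b e : wiso (wtens MM0 (NN e)) MM0.
Proof. by apply: (@wisoRf _ _ _ idl idl); go. Qed.

Definition perm4 : nat -> nat -> F := lm [:: [:: 1;0;0;0]; [:: 0;0;1;0]; [:: 0;1;0;0]; [:: 0;0;0;1]].

Lemma c9 : wiso (wtens MM0 MM0) (wsum MM0 MM0).
Proof. by apply: (@wisoRf _ _ _ perm4 perm4); rewrite /perm4; go. Qed.

Lemma c10a1 s : wiso (wtens MM0 (MM1 s)) (wsum MM0 (wzero F)).
Proof. by apply: (@wisoRf _ _ _ idl idl); go. Qed.

Lemma c10a2 s : wiso (wtens MM0 (MM2 s)) (wsum MM0 (wsum MM0 (wzero F))).
Proof. by apply: (@wisoRf _ _ _ perm4 perm4); rewrite /perm4; go. Qed.

Lemma c10b1 s (hs : pm s) : wiso (wsum MM0 (wzero F)) (wtens (MM1 s) MM0).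
Proof.
by apply: (@wisoRf _ _ _ (lm [:: [:: 1;0]; [:: 0;s]]) (lm [:: [:: 1;0]; [:: 0;s]])); case: hs => ->; go.
Qed.

Lemma c10b2 s (hs : pm s) : wiso (wsum MM0 (wsum MM0 (wzero F))) (wtens (MM2 s) MM0).
Proof.
by apply: (@wisoRf _ _ _ (lm [:: [:: 1;0;0;0]; [:: 0;s;0;0]; [:: 0;1;1;0]; [:: 0;0;0;-s]])
  (lm [:: [:: 1;0;0;0]; [:: 0;s;0;0]; [:: 0;-s;1;0]; [:: 0;0;0;-s]])); case: hs => ->; go.
Qed.

Lemma c11a a : wiso (wtens MM0 (PP a)) (wsum MM0 MM0).
Proof. by apply: (@wisoRf _ _ _ perm4 perm4); rewrite /perm4; go. Qed.

Lemma c11b a : wiso (wsum MM0 MM0) (wtens (PP a) MM0).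
Proof.
by apply: (@wisoRf _ _ _ (lm [:: [:: 1;0;0;a]; [:: 0;a;1;0]; [:: 0;1;0;0]; [:: 0;0;0;1]])
  (lm [:: [:: 1;0;0;-a]; [:: 0;0;1;0]; [:: 0;1;-a;0]; [:: 0;0;0;1]])); go.
Qed.

End Cases.
Arguments PP {F} a.
Arguments MM2 {F} s.
Arguments MM1 {F} s.
Arguments NN {F} e.
Arguments pm {F} s.

Lemma P_eq (F : fieldType) (q : F) j : Pj q j = PP (q ^+ j).
Proof. by rewrite /Pj /PP mulnC exprM. Qed.

Lemma M2E (F : fieldType) n s : M2 F n s = MM2 (sgn F n s).
Proof. by []. Qed.

Lemma Mks1 (F : fieldType) n s : Mks F n 1 s = MM1 (sgn F n s).
Proof. by []. Qed.
Lemma Mks2 (F : fieldType) n s : Mks F n 2 s = MM2 (sgn F n s).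
Proof. by []. Qed.

Lemma sgn0 (F : fieldType) n : sgn F n 0 = 1.
Proof. by rewrite /sgn div0n expr0. Qed.

Lemma sgnn (F : fieldType) n : (0 < n)%N -> sgn F n n = -1.
Proof. by move=> n0; rewrite /sgn divnn n0 expr1. Qed.

Lemma pms (F : fieldType) n s : (0 < n)%N -> (s == 0%N) || (s == n) -> pm (sgn F n s).
Proof. by move=> n0 /orP [] /eqP ->; [left; rewrite sgn0 | right; rewrite sgnn]. Qed.

Lemma pmj (F : fieldType) j : (j <= 1)%N -> pm ((-1) ^+ j : F).
Proof. by case: j => [|[|]] // _; [left | right; rewrite expr1]. Qed.

Lemma sgn_add (F : fieldType) n s j : (0 < n)%N -> (s == 0%N) || (s == n) -> (j == 0%N) || (j == n) ->
  sgn F n ((s + j) %% (2 * n)) = sgn F n s * sgn F n j.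
Proof.
move=> n0 /orP [] /eqP -> /orP [] /eqP ->.
- by rewrite addn0 mod0n sgn0 mulr1.
- by rewrite add0n modn_small ?sgn0 ?mul1r //; lia.
- by rewrite addn0 modn_small ?sgn0 ?mulr1 //; lia.
- by rewrite addnn -mul2n modnn sgn0 sgnn // mulrNN mulr1.
Qed.

Theorem theorem5p3 (F : closedFieldType) (hchar : [pchar F] =i pred0)
  (n : nat) (hn : (2 <= n)%N) (q : F) (hq : (2 * n).-primitive_root q) :
  (* (1) *)
  (forall i j : nat, (1 <= i <= n - 1)%N -> (1 <= j <= n - 1)%N ->
     (n %| i + j)%N ->
     wiso (wtens (Pj q i) (Pj q j)) (wsum (M2 F n 0) (M2 F n n))) /\
  (forall i j : nat, (1 <= i <= n - 1)%N -> (1 <= j <= n - 1)%N ->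
     ~~ (n %| i + j)%N ->
     wiso (wtens (Pj q i) (Pj q j)) (wsum (Pj q (i + j)) (Pj q (i + j)))) /\
  (* (2) *)
  (forall k s j : nat, (k == 1%N) || (k == 2%N) -> (s == 0%N) || (s == n) ->
     (1 <= j <= n - 1)%N ->
     wiso (wtens (Mks F n k s) (Pj q j)) (wpow (Pj q j) k) /\
     wiso (wpow (Pj q j) k) (wtens (Pj q j) (Mks F n k s))) /\
  (* (3) *)
  (forall k l s j : nat, (k == 1%N) || (k == 2%N) -> (l == 1%N) || (l == 2%N) ->
     (s == 0%N) || (s == n) -> (j == 0%N) || (j == n) ->
     (k + l = 4)%N ->
     wiso (wtens (Mks F n k s) (Mks F n l j)) (wsum (M2 F n 0) (M2 F n n))) /\
  (forall k l s j : nat, (k == 1%N) || (k == 2%N) -> (l == 1%N) || (l == 2%N) ->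
     (s == 0%N) || (s == n) -> (j == 0%N) || (j == n) ->
     (k + l < 4)%N ->
     wiso (wtens (Mks F n k s) (Mks F n l j))
          (Mks F n (k + l - 1) ((s + j) %% (2 * n)))) /\
  (* (4) *)
  (forall i j : nat, (i <= 1)%N -> (j <= 1)%N ->
     wiso (wtens (Ni F i) (Ni F j)) (Ni F i)) /\
  (* (5) *)
  (forall s j : nat, (s == 0%N) || (s == n) -> (j <= 1)%N ->
     wiso (wtens (M1 F n s) (Ni F j)) (Ni F ((j + s %/ n) %% 2)) /\
     wiso (wtens (M2 F n s) (Ni F j)) (M0 F)) /\
  (* (6) *)
  (forall k s j : nat, (k == 1%N) || (k == 2%N) -> (s == 0%N) || (s == n) ->
     (j <= 1)%N ->
     wiso (wtens (Ni F j) (Mks F n k s)) (wpow (Ni F j) k)) /\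
  (* (7) *)
  (forall i j : nat, (i <= 1)%N -> (1 <= j <= n - 1)%N ->
     wiso (wtens (Ni F i) (Pj q j)) (wsum (Ni F i) (Ni F i)) /\
     wiso (wtens (Pj q j) (Ni F i)) (M0 F)) /\
  (* (8) *)
  (forall i : nat, (i <= 1)%N ->
     wiso (wtens (Ni F i) (M0 F)) (wsum (Ni F i) (Ni F i)) /\
     wiso (wtens (M0 F) (Ni F i)) (M0 F)) /\
  (* (9) *)
  wiso (wtens (M0 F) (M0 F)) (wsum (M0 F) (M0 F)) /\
  (* (10) *)
  (forall k s : nat, (k == 1%N) || (k == 2%N) -> (s == 0%N) || (s == n) ->
     wiso (wtens (M0 F) (Mks F n k s)) (wpow (M0 F) k) /\
     wiso (wpow (M0 F) k) (wtens (Mks F n k s) (M0 F))) /\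
  (* (11) *)
  (forall j : nat, (1 <= j <= n - 1)%N ->
     wiso (wtens (M0 F) (Pj q j)) (wsum (M0 F) (M0 F)) /\
     wiso (wsum (M0 F) (M0 F)) (wtens (Pj q j) (M0 F))).
Proof.
have n0 : (0 < n)%N by lia.
have q2n : q ^+ (2 * n) = 1 := prim_expr_order hq.
have qn0 : q != 0.
  apply/eqP => q0; move: q2n; rewrite q0 expr0n.
  have -> : (2 * n == 0)%N = false by apply/negbTE; lia.
  by move/eqP; rewrite eq_sym oner_eq0.
have qa0 i : q ^+ i != 0 := expf_neq0 i qn0.
have nz m : ~~ (n %| m)%N -> 1 - (q ^+ m) ^+ 2 != 0.
  move=> hm; rewrite subr_eq0 eq_sym -exprM -(prim_order_dvd hq) (mulnC m 2).
  by rewrite dvdn_pmul2l.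
have ndj j : (1 <= j <= n - 1)%N -> ~~ (n %| j)%N.
  by move=> /andP [j1 j2]; rewrite gtnNdvd //; lia.
have qn : q ^+ n = -1.
  have : (q ^+ n) ^+ 2 = 1 by rewrite -exprM mulnC.
  move/eqP; rewrite sqrf_eq1 => /orP [/eqP h|/eqP //].
  have : (2 * n %| n)%N by rewrite (prim_order_dvd hq) h.
  by rewrite gtnNdvd //; lia.
have pmn := @pms F n.
refine (conj _ (conj _ (conj _ (conj _ (conj _ (conj _ (conj _ (conj _ (conj _ (conj _ (conj _ (conj _ _)))))))))))).
- move=> i j hi hj hd.
  have hij : (i + j = n)%N.
    move/dvdnP: hd => [k hk].
    case: k hk => [|[|k]] hk; first by lia.
      by lia.
    by nia.
  rewrite !P_eq !M2E sgn0 sgnn //; apply: c1a => //.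
  by rewrite -exprD hij qn.
- move=> i j hi hj hd.
  rewrite !P_eq exprD; apply: c1b; rewrite -exprD; exact: nz.
- move=> k s j /orP [] /eqP -> hs hj; rewrite /Mks /wpow /= !P_eq.
    by split; [apply: c2a1 | apply: c2b1]; first [by apply: pmn | by apply: nz; apply: ndj].
  by split; [apply: c2a2 | apply: c2b2]; first [by apply: pmn | by apply: nz; apply: ndj].
- move=> k l s j /orP [] /eqP -> /orP [] /eqP -> hs hj //= _.
  rewrite /Mks /= !M2E sgn0 sgnn //; apply: c3a; exact: pmn.
- move=> k l s j /orP [] /eqP -> /orP [] /eqP -> hs hj //= _.
  + rewrite (_ : (1 + 1 - 1 = 1)%N) // !Mks1 sgn_add //.
    exact: c3_11.
  + rewrite (_ : (1 + 2 - 1 = 2)%N) // Mks1 !Mks2 sgn_add //.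
    by apply: c3_12; apply: pmn.
  + rewrite (_ : (2 + 1 - 1 = 2)%N) // Mks1 !Mks2 sgn_add //.
    exact: c3_21.
- move=> i j _ _; exact: c4.
- move=> s j hs hj; split.
    rewrite /Ni modn2 signr_odd exprD; exact: c5a.
  by apply: c5b; [apply: pmn | apply: pmj].
- move=> k s j /orP [] /eqP -> hs hj; rewrite /Mks /wpow /=.
    exact: c6_1.
  exact: c6_2.
- move=> i j hi hj; rewrite !P_eq; split; first exact: c7a.
  by apply: c7b; apply: pmj.
- by move=> i hi; split; [exact: c8a | exact: c8b].
- exact: c9.
- move=> k s /orP [] /eqP -> hs; rewrite /Mks /wpow /=.
    by split; [exact: c10a1 | apply: c10b1; apply: pmn].
  by split; [exact: c10a2 | apply: c10b2; apply: pmn].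
- by move=> j hj; rewrite !P_eq; split; [exact: c11a | exact: c11b].
Qed.
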